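(* Let $n\ge1$ and $s\ge0$ be integers such that $\lambda=3^{(n+s-1)/2}$ is an integer. Let $D_0,D_1,D_2$ be a partition of $\mathbb{F}_{3^n}$ such that each $D_i$ is a partial geometric difference set in the additive group of $\mathbb{F}_{3^n}$ and $\chi_a(D_i)\in\{0,\pm\lambda,\pm\lambda\zeta_3,\pm\lambda\zeta_3^2\}$ for every $a\in\mathbb{F}_{3^n}^*$ and $i=0,1,2$. Suppose one of the following holds: (1) $|D_0|=|D_1|=|D_2|$; (2) for some ordering $\{i,j,k\}=\{0,1,2\}$, $|D_i|=|D_j|=3^{n-1}-3^{(n+s-2)/2}$ and $|D_k|=3^{n-1}+2\cdot3^{(n+s-2)/2}$; (3) for some ordering $\{i,j,k\}=\{0,1,2\}$, $|D_i|=|D_j|=3^{n-1}+3^{(n+s-2)/2}$ and $|D_k|=3^{n-1}-2\cdot3^{(n+s-2)/2}$. Suppose further that $|\langle z_a,e\rangle|^2\in\{0,3\lambda^2\}$ for every $a\in\mathbb{F}_{3^n}^*$. Then the function $f:\mathbb{F}_{3^n}\to\mathbb{F}_3$ defined by $f(x)=i$ for $x\in D_i$ is $s$-plateaued.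
   Context: $\zeta_3=e^{2\pi i/3}$, $Tr_n(z)=\sum_{i=0}^{n-1}z^{3^i}$. For $a\in\mathbb{F}_{3^n}$, $\chi_a$ is the additive character $\chi_a(x)=\zeta_3^{Tr_n(ax)}$, and $\chi_a(S)=\sum_{x\in S}\chi_a(x)$. $z_a=(\chi_a(D_0),\chi_a(D_1),\chi_a(D_2))\in\mathbb{C}^3$, $e=(1,\zeta_3,\zeta_3^2)$, and $\langle u,w\rangle=\sum_i u_i\overline{w_i}$ is the complex inner product. Partial geometric difference set: $S\subseteq G$ ($G$ abelian of order $v$, $|S|=k$, $v>k>2$) such that, with $\delta(g)=|\{(s,t)\in S\times S:g=s-t\}|$, $\sum_{y\in S}\delta(x-y)$ equals a constant $\alpha$ for $x\notin S$ and a constant $\beta$ for $x\in S$. A function $f:\mathbb{F}_{3^n}\to\mathbb{F}_3$ is $s$-plateaued if $|\widehat f(\mu)|\in\{0,3^{(n+s)/2}\}$ for all $\mu$, where $\widehat f(\mu)=\sum_{x}\zeta_3^{f(x)-Tr_n(\mu x)}$. *)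

(* Defs.v *)
From HB Require Import structures.
From mathcomp Require Import all_boot all_order all_algebra all_field.
From mathcomp Require Import algC.
Set Implicit Arguments. Unset Strict Implicit. Unset Printing Implicit Defensive.
Import Order.TTheory GRing.Theory Num.Theory.
Local Open Scope ring_scope.

(* zeta_3 = e^{2 pi i/3} = (-1 + i sqrt 3)/2 in the algebraic complex numbers *)
Definition zeta3 : algC := (-1 + sqrtC (-3)) / 2.

Definition pg_delta (G : finZmodType) (S : {set G}) (g : G) : nat :=
  #|[set p : G * G | [&& p.1 \in S, p.2 \in S & g == p.1 - p.2]]|.

Definition partial_geometric_ds (G : finZmodType) (S : {set G}) : Prop :=
  (2 < #|S|)%N /\ (#|S| < #|G|)%N /\
  exists alpha beta : nat, forall x : G,
    (\sum_(y in S) pg_delta S (x - y)%R)%N = (if x \in S then beta else alpha).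

Definition trn (F : finFieldType) (n : nat) (z : F) : F :=
  \sum_(i < n) z ^+ (3 ^ i).

(* identify an element of the prime field {0,1,2} of F with its exponent *)
Definition f3exp (F : finFieldType) (t : F) : nat :=
  if t == 0 then 0%N else if t == 1 then 1%N else 2%N.

Definition chi (F : finFieldType) (n : nat) (a x : F) : algC :=
  zeta3 ^+ f3exp (trn n (a * x)).

Definition chiS (F : finFieldType) (n : nat) (a : F) (S : {set F}) : algC :=
  \sum_(x in S) chi n a x.

Definition za_dot_e (F : finFieldType) (n : nat) (D : 'I_3 -> {set F}) (a : F)
  : algC := \sum_(i < 3) chiS n a (D i) * (zeta3 ^+ i)^*.

Definition fD (F : finFieldType) (D : 'I_3 -> {set F}) (x : F) : 'I_3 :=
  odflt ord0 [pick i | x \in D i].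

Definition walsh (F : finFieldType) (n : nat) (f : F -> 'I_3) (mu : F) : algC :=
  \sum_(x : F) zeta3 ^+ (f x) * (zeta3 ^+ f3exp (trn n (mu * x)))^-1.

Definition plateaued (F : finFieldType) (n s : nat) (f : F -> 'I_3) : Prop :=
  forall mu : F, `|walsh n f mu| = 0 \/ `|walsh n f mu| = sqrtC (3 ^ (n + s))%:R.

(* Main.v *)
Require Import Defs.
From HB Require Import structures.
From mathcomp Require Import all_boot all_order all_algebra all_field.
From mathcomp Require Import algC.
From mathcomp Require Import ring.
Import Order.TTheory GRing.Theory Num.Theory.
Local Open Scope ring_scope.

Lemma zeta_sum : 1 + zeta3 + zeta3 ^+ 2 = 0.
Proof.
rewrite /zeta3; set r := sqrtC (-3 : algC).
have hr : r ^+ 2 = -3 by rewrite sqrtCK.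
have h2 : (4 : algC) != 0 by rewrite pnatr_eq0.
have -> : 1 + (-1 + r) / 2 + ((-1 + r) / 2) ^+ 2 = (3 + r ^+ 2) / 4.
  by field.

by rewrite hr addrN mul0r.
Qed.

Lemma zeta3_3 : zeta3 ^+ 3 = 1.
Proof.
apply/eqP; rewrite -subr_eq0.
have -> : zeta3 ^+ 3 - 1 = (zeta3 - 1) * (1 + zeta3 + zeta3 ^+ 2) by ring.
by rewrite zeta_sum mulr0.
Qed.

Lemma norm_zeta : `|zeta3| = 1.
Proof.
apply/eqP; rewrite -(pexpr_eq1 (n:=3)) // -normrX zeta3_3 normr1 //.
Qed.

Lemma zinv m : (zeta3 ^+ m)^-1 = (zeta3 ^+ m)^*.
Proof. by rewrite invC_norm normrX norm_zeta expr1n expr1n invr1 mul1r. Qed.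

Lemma fD_eq (F : finFieldType) (D : 'I_3 -> {set F}) x i :
  (forall x : F, exists i : 'I_3, x \in D i) ->
  (forall i j : 'I_3, i != j -> [disjoint D i & D j]) ->
  (fD D x == i) = (x \in D i).
Proof.
move=> cov dis; rewrite /fD; case: pickP => [i0 Hi0 | H] /=.
  case: (eqVneq i0 i) => [e|ne].
    by subst i0; rewrite Hi0; apply/eqP.
  by rewrite (disjointFr (dis _ _ ne) Hi0); apply/negbTE.
by case: (cov x) => j Hj; move: (H j); rewrite Hj.
Qed.


Lemma walsh_conj (F : finFieldType) (n : nat) (D : 'I_3 -> {set F}) mu :
  (forall x : F, exists i : 'I_3, x \in D i) ->
  (forall i j : 'I_3, i != j -> [disjoint D i & D j]) ->
  walsh n (fD D) mu = (za_dot_e n D mu)^*.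
Proof.
move=> cov dis; rewrite /walsh /za_dot_e rmorph_sum /=.
rewrite (partition_big (fD D) xpredT) //=; apply: eq_bigr => i _.
rewrite rmorphM /= conjCK mulrC /chiS rmorph_sum mulr_sumr /=.
apply: eq_big => [x|x]; first by rewrite fD_eq.
by move/eqP ->; rewrite zinv.
Qed.

Lemma zsum : \sum_(l < 3) zeta3 ^+ l = 0.
Proof. by rewrite !big_ord_recr big_ord0 /= add0r expr0 expr1 zeta_sum. Qed.

Lemma expo n s : odd (n + s) -> (3 * ((3 ^ ((n + s).-1./2))%:R : algC) ^+ 2 = (3 ^ (n + s))%:R).
Proof.
move=> ho; rewrite -natrX -natrM -expnM -expnS; congr (_ ^ _)%:R.
have := odd_double_half (n + s); rewrite ho.
move: ((n+s)./2) => k <-; rewrite add1n /= doubleK muln2 //.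
Qed.

Lemma ord3_cases (l : 'I_3) : l = ord0 \/ l = inord 1 \/ l = inord 2.
Proof.
case: l => [[|[|[|//]]] ?]; [left|right;left|right;right]; apply: val_inj; by rewrite /= ?inordK.
Qed.

Lemma rest3 (i j k l : 'I_3) : [&& i != j, j != k & i != k] ->
  ((l != i) && (l != j)) = (l == k).
Proof.
by case: i => [[|[|[|//]]] ?]; case: j => [[|[|[|//]]] ?]; case: k => [[|[|[|//]]] ?];
  case: l => [[|[|[|//]]] ?].
Qed.

Lemma sum3 (g : 'I_3 -> algC) i j k : [&& i != j, j != k & i != k] ->
  \sum_(l < 3) g l = g i + g j + g k.
Proof.
move=> hd; rewrite (bigD1 i) //= (bigD1 j) /=; last by case/and3P: hd; rewrite eq_sym.
rewrite (eq_bigl (pred1 k)) ?big_pred1_eq ?addrA // => l /=.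
by rewrite (rest3 i j k l hd).
Qed.

Theorem mainTheorem6 (F : finFieldType) (n s : nat) (D : 'I_3 -> {set F}) :
  (1 <= n)%N ->
  #|F| = (3 ^ n)%N ->
  (* lambda = 3^((n+s-1)/2) is an integer, i.e. n+s-1 is even *)
  odd (n + s) ->
  let lambda : algC := (3 ^ ((n + s).-1./2))%:R in
  let c : algC := sqrtC (3 ^ (n + s))%:R / 3 in   (* = 3^((n+s-2)/2) *)
  (* D_0, D_1, D_2 partition F *)
  (forall x : F, exists i : 'I_3, x \in D i) ->
  (forall i j : 'I_3, i != j -> [disjoint D i & D j]) ->
  (forall i : 'I_3, partial_geometric_ds (D i)) ->
  (forall (a : F) (i : 'I_3), a != 0 ->
     chiS n a (D i) = 0 \/
     exists (j : 'I_3) (b : bool), chiS n a (D i) = (-1) ^+ b * lambda * zeta3 ^+ j) ->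
  [\/ #|D ord0| = #|D (inord 1)| /\ #|D (inord 1)| = #|D (inord 2)|,
      exists i j k : 'I_3, [/\ [&& i != j, j != k & i != k],
        (#|D i|)%:R = (3 ^ n.-1)%:R - c :> algC,
        (#|D j|)%:R = (3 ^ n.-1)%:R - c :> algC &
        (#|D k|)%:R = (3 ^ n.-1)%:R + 2 * c :> algC]
    | exists i j k : 'I_3, [/\ [&& i != j, j != k & i != k],
        (#|D i|)%:R = (3 ^ n.-1)%:R + c :> algC,
        (#|D j|)%:R = (3 ^ n.-1)%:R + c :> algC &
        (#|D k|)%:R = (3 ^ n.-1)%:R - 2 * c :> algC]] ->
  (forall a : F, a != 0 ->
     `|za_dot_e n D a| ^+ 2 = 0 \/ `|za_dot_e n D a| ^+ 2 = 3 * lambda ^+ 2) ->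
  plateaued n s (fD D).
Proof.
move=> n1 cardF ho lambda c cov dis _ _ hcard hza mu.
rewrite walsh_conj // norm_conjC.
case: (eqVneq mu 0) => [->|mu0]; last first.
  case: (hza mu mu0) => h.
    by left; move/eqP: h; rewrite expf_eq0 /= => /eqP.
  right; rewrite -[LHS]sqrCK ?normr_ge0 // h /lambda expo //.
have chi0 : forall i, chiS n 0 (D i) = (#|D i|)%:R.
  move=> i; rewrite /chiS (eq_bigr (fun _ => 1)) ?sumr_const // => x _.
  rewrite /chi mul0r /trn big1; first by rewrite /f3exp eqxx.
  by move=> l _; rewrite expr0n expn_eq0.
have hW : za_dot_e n D 0 = (\sum_(l < 3) (#|D l|)%:R * zeta3 ^+ l)^*.
  rewrite /za_dot_e rmorph_sum; apply: eq_bigr => l _.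
  by rewrite chi0 rmorphM /= rmorph_nat.
have h3 : (3 : algC) != 0 by rewrite pnatr_eq0.
have h3c : `|3 * c| = sqrtC (3 ^ (n + s))%:R.
  by rewrite /c mulrC divfK // ger0_norm // sqrtC_ge0 ler0n.
have zs := zsum.
rewrite hW norm_conjC; case: hcard => [[e1 e2]|[i [j [k [hd Hi Hj Hk]]]]|[i [j [k [hd Hi Hj Hk]]]]].
- left; rewrite (eq_bigr (fun l : 'I_3 => (#|D ord0|)%:R * zeta3 ^+ l)).
    by rewrite -mulr_sumr zsum mulr0 normr0.
  by move=> l _; case: (ord3_cases l) => [->|[->|->]]; rewrite ?e1 ?e2.
- right; rewrite (sum3 _ _ _ _ hd) Hi Hj Hk; rewrite (sum3 _ _ _ _ hd) in zs.
  set A : algC := (3 ^ n.-1)%:R.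
  have -> : (A - c) * zeta3 ^+ i + (A - c) * zeta3 ^+ j + (A + 2 * c) * zeta3 ^+ k
     = (A - c) * (zeta3 ^+ i + zeta3 ^+ j + zeta3 ^+ k) + 3 * c * zeta3 ^+ k by ring.
  by rewrite zs mulr0 add0r normrM normrX norm_zeta expr1n mulr1.
- right; rewrite (sum3 _ _ _ _ hd) Hi Hj Hk; rewrite (sum3 _ _ _ _ hd) in zs.
  set A : algC := (3 ^ n.-1)%:R.
  have -> : (A + c) * zeta3 ^+ i + (A + c) * zeta3 ^+ j + (A - 2 * c) * zeta3 ^+ k
     = (A + c) * (zeta3 ^+ i + zeta3 ^+ j + zeta3 ^+ k) - 3 * c * zeta3 ^+ k by ring.
  by rewrite zs mulr0 add0r normrN normrM normrX norm_zeta expr1n mulr1.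
Qed.
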